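(* Let $\mathbb{M}$ be a weight sequence with sequence of quotients $\mathbf{m}$. The following are equivalent: (i) $0<\liminf_{t\to\infty}\frac{\nu_{\mathbf{m}}(t)}{\omega_{\mathbb{M}}(t)}\le\limsup_{t\to\infty}\frac{\nu_{\mathbf{m}}(t)}{\omega_{\mathbb{M}}(t)}<\infty$; (ii) $\beta(\nu_{\mathbf{m}})>0$ and $\alpha(\nu_{\mathbf{m}})<\infty$; (iii) $\beta(\omega_{\mathbb{M}})>0$ and $\alpha(\omega_{\mathbb{M}})<\infty$. In this case, $\beta(\omega_{\mathbb{M}})=\beta(\nu_{\mathbf{m}})$ and $\alpha(\omega_{\mathbb{M}})=\alpha(\nu_{\mathbf{m}})$.
   Context: A weight sequence is $\mathbb{M}=(M_p)_{p\in\mathbb{N}_0}$ of positive reals with $M_0=1$, $M_p^2\le M_{p-1}M_{p+1}$ ($p\ge1$) and $M_p^{1/p}\to\infty$; $m_p=M_{p+1}/M_p$. $\omega_{\mathbb{M}}(t):=\sup_{p\in\mathbb{N}_0}\log(t^p/M_p)$ for $t>0$, $\omega_{\mathbb{M}}(0)=0$; $\nu_{\mathbf{m}}(t):=\#\{j\in\mathbb{N}_0:m_j\le t\}$ for $t>0$. For a positive measurable $f$ on $[A,\infty)$: $\alpha(f):=\inf\{\alpha:\exists C_\alpha>0\ \forall\Lambda>1,\ \limsup_{x\to\infty}\sup_{\lambda\in[1,\Lambda]}\frac{f(\lambda x)}{\lambda^{\alpha}f(x)}\le C_\alpha\}$ and $\beta(f):=\sup\{\beta:\exists D_\beta>0\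 \forall\Lambda>1,\ \liminf_{x\to\infty}\inf_{\lambda\in[1,\Lambda]}\frac{f(\lambda x)}{\lambda^{\beta}f(x)}\ge D_\beta\}$; for $\omega_{\mathbb{M}}$, $\nu_{\mathbf{m}}$ they are computed on any $[A,\infty)$, $A>0$, where the function is positive. *)

(* Defs.v *)
From HB Require Import structures.
From mathcomp Require Import all_boot all_order all_algebra.
From mathcomp Require Import all_classical all_reals all_analysis.
Set Implicit Arguments. Unset Strict Implicit. Unset Printing Implicit Defensive.
Import Order.TTheory GRing.Theory Num.Theory.
Import numFieldNormedType.Exports.
Local Open Scope classical_set_scope.
Local Open Scope ring_scope.
From mathcomp Require Import finmap.

Section Defs.
Variable R : realType.

Definition weight_sequence (M : nat -> R) : Prop :=
  [/\ M 0%N = 1,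
      (forall p, 0 < M p),
      (forall p, (1 <= p)%N -> M p ^+ 2 <= M p.-1 * M p.+1) &
      ((fun p : nat => M p `^ (p%:R^-1)) @ \oo --> +oo)].

Definition quot (M : nat -> R) (p : nat) : R := M p.+1 / M p.

Definition omegaM (M : nat -> R) (t : R) : R :=
  if 0 < t then sup [set ln (t ^+ p / M p) | p in [set: nat]] else 0.

Definition nu (m : nat -> R) (t : R) : R :=
  (#|` fset_set [set j : nat | m j <= t] |)%fset%:R.

Local Open Scope ereal_scope.

Definition limsup_pinfty (g : R -> \bar R) : \bar R :=
  limf_esup g (pinfty_nbhs R).
Definition liminf_pinfty (g : R -> \bar R) : \bar R :=
  limf_einf g (pinfty_nbhs R).

(* index alpha(f) (an extended real: inf of the empty set is +oo) *)
Definition alpha_idx (f : R -> R) : \bar R :=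
  ereal_inf [set a%:E | a in [set a : R | exists C : R, (0 < C)%R /\
    forall L : R, (1 < L)%R ->
      limsup_pinfty (fun x => ereal_sup
        [set (f (l * x) / (l `^ a * f x))%:E | l in `[1%R, L]]) <= C%:E]].

(* index beta(f) (an extended real: sup of the empty set is -oo) *)
Definition beta_idx (f : R -> R) : \bar R :=
  ereal_sup [set b%:E | b in [set b : R | exists D : R, (0 < D)%R /\
    forall L : R, (1 < L)%R ->
      D%:E <= liminf_pinfty (fun x => ereal_inf
        [set (f (l * x) / (l `^ b * f x))%:E | l in `[1%R, L]])]].

End Defs.

(* Main.v *)
Require Import Defs.
From HB Require Import structures.
From mathcomp Require Import all_boot all_order all_algebra.
From mathcomp Require Import all_classical all_reals all_analysis.
From mathcomp Require Import ring lra.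
Import Order.TTheory GRing.Theory Num.Theory.
Local Open Scope classical_set_scope.
Local Open Scope ring_scope.

Module Helpers.
Import Num.Def.
Set Implicit Arguments. Unset Strict Implicit.

Definition evb (R : realType) (P : R -> Prop) := exists x0 : R, forall x, x0 < x -> P x.

Lemma evb_pinfty (R : realType) (P : set R) : evb P -> pinfty_nbhs R P.
Proof. by case=> x0 Hx; exists x0; split => //; exact: num_real. Qed.

Lemma pinfty_evb (R : realType) (P : set R) : pinfty_nbhs R P -> evb P.
Proof. by case=> x0 [_ Hx]; exists x0. Qed.

Lemma evb_and (R : realType) (P Q : R -> Prop) : evb P -> evb Q -> evb (fun x => P x /\ Q x).
Proof.
case=> a Ha [b Hb]; exists (maxr a b) => x; rewrite gt_max => /andP[xa xb].
by split; [exact: Ha|exact: Hb].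
Qed.

Lemma evb_mono (R : realType) (P Q : R -> Prop) : (forall x, P x -> Q x) -> evb P -> evb Q.
Proof. by move=> H [a Ha]; exists a => x /Ha/H. Qed.

Lemma evb_ex (R : realType) (P : R -> Prop) : evb P -> exists x, P x.
Proof. by case=> a Ha; exists (a + 1); apply: Ha; rewrite ltrDl. Qed.

Local Open Scope ereal_scope.

Lemma limsup_le (R : realType) (g : R -> \bar R) (C : \bar R) :
  evb (fun x => g x <= C) -> limsup_pinfty g <= C.
Proof.
case=> x0 Hx; rewrite /limsup_pinfty limf_esupE.
apply: (@le_trans _ _ (ereal_sup (g @` [set x | x0 < x]%R))).
  apply: ereal_inf_lbound; exists [set x | x0 < x]%R => //.
  by exists x0; split => //; exact: num_real.
by apply: ge_ereal_sup => _ [x /= /Hx gx <-].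
Qed.

Lemma limsup_lt (R : realType) (g : R -> \bar R) (C : \bar R) :
  limsup_pinfty g < C -> evb (fun x => g x < C).
Proof.
rewrite /limsup_pinfty limf_esupE => /ereal_inf_lt [_ [V FV <-] HV].
case: (pinfty_evb FV) => x0 Hx; exists x0 => x /Hx Vx.
apply: le_lt_trans HV; apply: ereal_sup_ubound; by exists x.
Qed.

Lemma liminf_ge (R : realType) (g : R -> \bar R) (D : \bar R) :
  evb (fun x => D <= g x) -> D <= liminf_pinfty g.
Proof.
case=> x0 Hx; rewrite /liminf_pinfty limf_einfE.
apply: (@le_trans _ _ (ereal_inf (g @` [set x | x0 < x]%R))); last first.
  apply: ereal_sup_ubound; exists [set x | x0 < x]%R => //.
  by exists x0; split => //; exact: num_real.
by apply: le_ereal_inf_tmp => _ [x /= /Hx gx <-].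
Qed.

Lemma liminf_gt (R : realType) (g : R -> \bar R) (D : \bar R) :
  D < liminf_pinfty g -> evb (fun x => D < g x).
Proof.
rewrite /liminf_pinfty limf_einfE => /ereal_sup_gt [_ [V FV <-] HV].
case: (pinfty_evb FV) => x0 Hx; exists x0 => x /Hx Vx.
apply: (lt_le_trans HV); apply: ereal_inf_lbound; by exists x.
Qed.

Lemma liminf_le_limsup (R : realType) (g : R -> \bar R) :
  liminf_pinfty g <= limsup_pinfty g.
Proof.
rewrite /liminf_pinfty /limsup_pinfty limf_einfE limf_esupE.
apply: ge_ereal_sup => _ [V FV <-]; apply: le_ereal_inf_tmp => _ [W FW <-].
have [x [Vx Wx]] := evb_ex (evb_and (pinfty_evb FV) (pinfty_evb FW)).
apply: (@le_trans _ _ (g x)).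
  by apply: ereal_inf_lbound; exists x.
by apply: ereal_sup_ubound; exists x.
Qed.


Local Close Scope ereal_scope.

Definition Aprop (R : realType) (f : R -> R) (a : R) := exists C, 0 < C /\
  forall L, 1 < L -> evb (fun x => forall l, 1 <= l <= L -> f (l * x) <= C * l `^ a * f x).
Definition Bprop (R : realType) (f : R -> R) (b : R) := exists D, 0 < D /\
  forall L, 1 < L -> evb (fun x => forall l, 1 <= l <= L -> D * l `^ b * f x <= f (l * x)).

Lemma alphaE (R : realType) (f : R -> R) : evb (fun x => 0 < f x) ->
  alpha_idx f = ereal_inf [set a%:E | a in [set a | Aprop f a]].
Proof.
move=> fpos; rewrite /alpha_idx; congr (ereal_inf _); congr (image _ _).
apply/seteqP; split => a /=.
- case=> C [C0 HC]; exists (C *+ 2); split; first by rewrite mulrn_wgt0.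
  move=> L L1; have := HC L L1.
  have H2 : (C%:E < (C *+ 2)%:E)%E by rewrite lte_fin mulr2n ltrDr.
  move/le_lt_trans/(_ H2)/limsup_lt => ev.
  apply: evb_mono (evb_and ev fpos) => x [Hx fx] l lL.
  have : ((f (l * x) / (l `^ a * f x))%:E < (C *+ 2)%:E)%E.
    apply: le_lt_trans Hx; apply: ereal_sup_ubound; exists l => //.
  rewrite lte_fin ltr_pdivrMr ?mulr_gt0 ?powR_gt0 //; last by case/andP: lL => /(lt_le_trans ltr01).
  by rewrite mulrA => /ltW.
- case=> C [C0 HC]; exists C; split => // L L1; apply: limsup_le.
  apply: evb_mono (evb_and (HC L L1) fpos) => x [Hx fx].
  apply: ge_ereal_sup => _ [l /= lL <-].
  rewrite in_itv /= in lL.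
  rewrite lee_fin ler_pdivrMr ?mulr_gt0 ?powR_gt0 //; last by case/andP: lL => /(lt_le_trans ltr01).
  by rewrite mulrA; apply: Hx.
Qed.

Lemma betaE (R : realType) (f : R -> R) : evb (fun x => 0 < f x) ->
  beta_idx f = ereal_sup [set a%:E | a in [set a | Bprop f a]].
Proof.
move=> fpos; rewrite /beta_idx; congr (ereal_sup _); congr (image _ _).
apply/seteqP; split => a /=.
- case=> D [D0 HD]; exists (D / 2); split; first by rewrite divr_gt0.
  move=> L L1; have := HD L L1.
  have H2 : ((D / 2)%:E < D%:E)%E by rewrite lte_fin ltr_pdivrMr // ltr_pMr // ltr1n.
  move/(lt_le_trans H2)/liminf_gt => ev.
  apply: evb_mono (evb_and ev fpos) => x [Hx fx] l lL.
  have : ((D / 2)%:E < (f (l * x) / (l `^ a * f x))%:E)%E.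
    apply: lt_le_trans Hx _; apply: ereal_inf_lbound; exists l => //.
  rewrite lte_fin ltr_pdivlMr ?mulr_gt0 ?powR_gt0 //; last by case/andP: lL => /(lt_le_trans ltr01).
  by rewrite mulrA => /ltW.
- case=> D [D0 HD]; exists D; split => // L L1; apply: liminf_ge.
  apply: evb_mono (evb_and (HD L L1) fpos) => x [Hx fx].
  apply: le_ereal_inf_tmp => _ [l /= lL <-].
  rewrite in_itv /= in lL.
  rewrite lee_fin ler_pdivlMr ?mulr_gt0 ?powR_gt0 //; last by case/andP: lL => /(lt_le_trans ltr01).
  by rewrite mulrA; apply: Hx.
Qed.

Lemma alpha_fin (R : realType) (f : R -> R) : evb (fun x => 0 < f x) ->
  ((alpha_idx f < +oo)%E <-> exists a, Aprop f a).
Proof.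
move=> fpos; rewrite alphaE //; split.
- move=> H; apply/not_existsP => Hn.
  move: H; suff -> : [set a%:E | a in [set a | Aprop f a]] = set0 by rewrite ereal_inf0.
  by apply/seteqP; split => // _ [a /= Ha _]; apply: (Hn a).
- case=> a Ha; apply: (@le_lt_trans _ _ a%:E); last exact: ltry.
  by apply: ereal_inf_lbound; exists a.
Qed.

Lemma beta_pos (R : realType) (f : R -> R) : evb (fun x => 0 < f x) ->
  ((0 < beta_idx f)%E <-> exists b, 0 < b /\ Bprop f b).
Proof.
move=> fpos; rewrite betaE //; split.
- by case/ereal_sup_gt => _ [b /= Hb <-]; rewrite lte_fin => b0; exists b.
- case=> b [b0 Hb]; apply: (@lt_le_trans _ _ b%:E); first by rewrite lte_fin.
  by apply: ereal_sup_ubound; exists b.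
Qed.


Definition evequiv (R : realType) (f g : R -> R) := exists c C, 0 < c /\ 0 < C /\
  evb (fun x => c * g x <= f x /\ f x <= C * g x).

Lemma evb_pos (R : realType) : evb (fun x : R => 0 < x).
Proof. by exists 0. Qed.

Lemma evequiv_sym (R : realType) (f g : R -> R) : evequiv f g -> evequiv g f.
Proof.
case=> c [C [c0 [C0 H]]]; exists C^-1, c^-1; split; first by rewrite invr_gt0.
split; first by rewrite invr_gt0.
apply: evb_mono H => x [H1 H2]; split.
- by rewrite ler_pdivrMl // mulrC.
- by rewrite ler_pdivlMl // mulrC.
Qed.

Lemma evb_up (R : realType) (P : R -> Prop) : evb P -> evb (fun x => forall y, x <= y -> P y).
Proof. by case=> x0 H; exists x0 => x x0x y xy; apply: H; apply: lt_le_trans xy. Qed.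

Lemma Aprop_transfer (R : realType) (f g : R -> R) a :
  evequiv f g -> Aprop g a -> Aprop f a.
Proof.
case=> c [C [c0 [C0 H]]] [Cg [Cg0 HA]].
exists (C * Cg / c); split; first by apply: divr_gt0 => //; exact: mulr_gt0.
move=> L L1; have ev := HA L L1.
apply: evb_mono (evb_and (evb_and ev (evb_up H)) (@evb_pos R)).
move=> x [[Hx Hup] x0] l lL.
have l1 : 1 <= l by case/andP: lL.
have lx : x <= l * x by rewrite ler_peMl // ltW.
have [Hg1 Hg2] := Hup x (le_refl _).
have [Hf1 Hf2] := Hup _ lx.
have lp : 0 < l `^ a by apply: powR_gt0; apply: lt_le_trans l1.
apply: (le_trans Hf2).
rewrite -!mulrA ler_pM2l //.
apply: (le_trans (Hx l lL)).
rewrite -mulrA ler_pM2l // mulrCA ler_pM2l //.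
by rewrite mulrC ler_pdivlMr // mulrC.
Qed.

Lemma Bprop_transfer (R : realType) (f g : R -> R) a :
  evequiv f g -> Bprop g a -> Bprop f a.
Proof.
case=> c [C [c0 [C0 H]]] [Dg [Dg0 HB]].
exists (c * Dg / C); split; first by apply: divr_gt0 => //; exact: mulr_gt0.
move=> L L1; have ev := HB L L1.
apply: evb_mono (evb_and (evb_and ev (evb_up H)) (@evb_pos R)).
move=> x [[Hx Hup] x0] l lL.
have l1 : 1 <= l by case/andP: lL.
have lx : x <= l * x by rewrite ler_peMl // ltW.
have [Hg1 Hg2] := Hup x (le_refl _).
have [Hf1 Hf2] := Hup _ lx.
have lp : 0 < l `^ a by apply: powR_gt0; apply: lt_le_trans l1.
apply: le_trans Hf1.
rewrite -!mulrA ler_pM2l //.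
apply: le_trans (Hx l lL).
rewrite -mulrA ler_pM2l // mulrCA ler_pM2l //.
by rewrite mulrC ler_pdivrMr // mulrC.
Qed.


Lemma bernoulli_ineq (R : realType) (lam : R) (k : nat) : 1 <= lam ->
  1 + k%:R * (lam - 1) <= lam ^+ k.
Proof.
move=> l1; elim: k => [|k IH]; first by rewrite mul0r addr0 expr0.
rewrite exprS -natr1.
have h0 : 0 <= lam - 1 by rewrite subr_ge0.
have hK : 0 <= k%:R :> R by [].
have h1 : 0 <= lam * (lam ^+ k - (1 + k%:R * (lam - 1))) by rewrite mulr_ge0 ?subr_ge0 // (le_trans ler01).
have h2 : 0 <= k%:R * (lam - 1) * (lam - 1) by rewrite !mulr_ge0.
nra.
Qed.

Lemma pow_unbounded (R : realType) (lam l : R) : 1 < lam -> exists k : nat, l <= lam ^+ k.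
Proof.
move=> l1; have h0 : 0 < lam - 1 by rewrite subr_gt0.
set k := archi_bound (`|l| / (lam - 1)).
have hk : `|l| / (lam - 1) < k%:R by apply: archi_boundP; rewrite divr_ge0 // ltW.
exists k; apply: le_trans (bernoulli_ineq k (ltW l1)).
move: hk; rewrite ltr_pdivrMr // => hk.
have := ler_norm l; lra.
Qed.

Lemma powR_lnQ (R : realType) (lam Q : R) : 1 < lam -> 0 < Q -> lam `^ (ln Q / ln lam) = Q.
Proof.
move=> l1 Q0; rewrite /powR gt_eqF ?(lt_trans ltr01) // divfK ?lnK //.
by rewrite gt_eqF // ln_gt0.
Qed.

Lemma powR_ge1 (R : realType) (l a : R) : 1 <= l -> 0 <= a -> 1 <= l `^ a.
Proof.
move=> l1 a0; rewrite /powR gt_eqF ?(lt_le_trans ltr01) //.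
apply: le_trans (expR_ge1Dx _); rewrite lerDl mulr_ge0 // ln_ge0 //.
Qed.

Lemma grow_up (R : realType) (w : R -> R) (lam Q x : R) :
  1 < lam -> 1 <= Q -> 0 < x ->
  (forall s t, x <= s -> s <= t -> w s <= w t) ->
  (forall y, x <= y -> 0 <= w y) ->
  (forall y, x <= y -> w (lam * y) <= Q * w y) ->
  forall l, 1 <= l -> w (l * x) <= Q * l `^ (ln Q / ln lam) * w x.
Proof.
move=> l1 Q1 x0 wm wp wQ l ll.
have lam0 : 0 < lam by apply: lt_trans l1.
have Q0 : 0 < Q by apply: lt_le_trans Q1.
have a0 : 0 <= ln Q / ln lam by rewrite divr_ge0 // ?ln_ge0 // ltW // ln_gt0.
have [k lk] := pow_unbounded l l1.
elim: k l ll lk => [|k IH] l ll lk.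
  have -> : l = 1 by apply: le_anti; rewrite ll andbT; rewrite expr0 in lk.
  rewrite mul1r powR1 mulr1; rewrite ler_peMl //; exact: wp.
have [llam|llam] := leP l lam.
  apply: (le_trans (wm _ _ _ _)); first by rewrite ler_peMl // ltW.
    by apply: ler_wpM2r llam; exact: ltW.
  apply: le_trans (wQ x (le_refl _)) _.
  rewrite -mulrA ler_wpM2l ?(le_trans ler01) // ler_peMl ?wp //.
  exact: powR_ge1.
set l' := l / lam.
have hl : l = lam * l' by rewrite /l' mulrC divfK // gt_eqF.
have l'1 : 1 <= l' by rewrite /l' ler_pdivlMr // mul1r ltW.
have l'k : l' <= lam ^+ k by rewrite /l' ler_pdivrMr // mulrC -exprS.
have xl' : x <= l' * x by rewrite ler_peMl // ltW.
rewrite hl -[lam * l' * x]mulrA.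
apply: le_trans (wQ _ xl') _.
apply: le_trans (ler_wpM2l (ltW Q0) (IH _ l'1 l'k)) _.
rewrite powRM ?(ltW lam0) ?(le_trans ler01) // powR_lnQ //.
by rewrite !mulrA.
Qed.

Lemma grow_down (R : realType) (w : R -> R) (lam Q x : R) :
  1 < lam -> 1 <= Q -> 0 < x ->
  (forall s t, x <= s -> s <= t -> w s <= w t) ->
  (forall y, x <= y -> 0 <= w y) ->
  (forall y, x <= y -> Q * w y <= w (lam * y)) ->
  forall l, 1 <= l -> Q^-1 * l `^ (ln Q / ln lam) * w x <= w (l * x).
Proof.
move=> l1 Q1 x0 wm wp wQ l ll.
have lam0 : 0 < lam by apply: lt_trans l1.
have Q0 : 0 < Q by apply: lt_le_trans Q1.
have a0 : 0 <= ln Q / ln lam by rewrite divr_ge0 // ?ln_ge0 // ltW // ln_gt0.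
have [k lk] := pow_unbounded l l1.
elim: k l ll lk => [|k IH] l ll lk.
  have -> : l = 1 by apply: le_anti; rewrite ll andbT; rewrite expr0 in lk.
  rewrite mul1r powR1 mulr1; rewrite ler_pdivrMl // ler_peMl //; exact: wp.
have [llam|llam] := leP l lam.
  apply: le_trans (wm x _ (le_refl _) _); last by rewrite ler_peMl // ltW.
  rewrite -{2}(mul1r (w x)); apply: ler_wpM2r; first exact: wp.
  rewrite mulrC ler_pdivrMr // mul1r.
  rewrite -{2}(powR_lnQ l1 Q0); apply: ge0_ler_powR => //.
    by rewrite nnegrE (le_trans ler01).
  by rewrite nnegrE ltW.
set l' := l / lam.
have hl : l = lam * l' by rewrite /l' mulrC divfK // gt_eqF.
have l'1 : 1 <= l' by rewrite /l' ler_pdivlMr // mul1r ltW.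
have l'k : l' <= lam ^+ k by rewrite /l' ler_pdivrMr // mulrC -exprS.
have xl' : x <= l' * x by rewrite ler_peMl // ltW.
rewrite hl -[lam * l' * x]mulrA.
apply: le_trans (wQ _ xl').
apply: le_trans (ler_wpM2l (ltW Q0) (IH _ l'1 l'k)).
rewrite powRM ?(ltW lam0) ?(le_trans ler01) // powR_lnQ //.
rewrite !mulrA mulfV ?gt_eqF // mul1r mulrC.
by rewrite mulVf ?gt_eqF // mul1r mulrC.
Qed.


Record WN (R : realType) (w n : R -> R) : Prop := {
  w_ge0 : forall t, 0 < t -> 0 <= w t;
  n_ge0 : forall t, 0 <= n t;
  n_mono : forall s t, 0 < s -> s <= t -> n s <= n t;
  wH2 : forall t l, 0 < t -> 1 <= l -> n t * ln l <= w (l * t) - w t;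
  wH3 : forall t l, 0 < t -> 1 <= l -> w t - w (t / l) <= n t * ln l;
  wevp : evb (fun t => 0 < w t /\ 1 <= n t) }.

Lemma WN_mono (R : realType) (w n : R -> R) : WN w n ->
  forall s t, 0 < s -> s <= t -> w s <= w t.
Proof.
move=> W s t s0 st.
have l1 : 1 <= t / s by rewrite ler_pdivlMr // mul1r.
have := wH2 W s0 l1; rewrite mulrC divfK ?gt_eqF //.
have : 0 <= n s * ln (t / s) by rewrite mulr_ge0 ?(n_ge0 W) ?ln_ge0.
lra.
Qed.

Lemma evb_scale (R : realType) (P : R -> Prop) (lam : R) : 0 < lam ->
  evb P -> evb (fun t => P (t / lam)).
Proof.
move=> l0 [x0 H]; exists (x0 * lam) => t xt; apply: H.
by rewrite ltr_pdivlMr.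
Qed.

Lemma ln2_gt0 (R : realType) : 0 < ln (2 : R).
Proof. by rewrite ln_gt0 // ltr1n. Qed.

Lemma equiv_iii (R : realType) (w n : R -> R) : WN w n -> evequiv n w ->
  (exists a, Aprop w a) /\ (exists b, 0 < b /\ Bprop w b).
Proof.
move=> W [c [C [c0 [C0 [x1 H]]]]].
set x0 := maxr x1 0 + 1.
have x0p : 0 < x0 by rewrite /x0 ltr_pwDr // le_max lexx orbT.
have x01 : x1 < x0 by rewrite /x0 ltr_pwDr // le_max lexx.
have Hy : forall y, x0 <= y -> c * w y <= n y /\ n y <= C * w y.
  by move=> y y0; apply: H; apply: lt_le_trans y0.
have wm : forall s t, x0 <= s -> s <= t -> w s <= w t.
  by move=> s t s0 st; apply: (WN_mono W) => //; apply: lt_le_trans s0.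
have wp : forall y, x0 <= y -> 0 <= w y.
  by move=> y y0; apply: (w_ge0 W); apply: lt_le_trans y0.
split.
- set lam := expR (C *+ 2)^-1.
  have lam1 : 1 < lam by rewrite /lam expR_gt1 invr_gt0 mulrn_wgt0.
  have lnl : ln lam = (C *+ 2)^-1 by rewrite /lam expRK.
  have key : forall y, x0 <= y -> w (lam * y) <= 2 * w y.
    move=> y y0.
    have y0' : 0 < y by apply: lt_le_trans y0.
    have ly : x0 <= lam * y by apply: (le_trans y0); rewrite ler_peMl // ?ltW.
    have := wH3 W (mulr_gt0 (lt_trans ltr01 lam1) y0') (ltW lam1).
    rewrite [lam * y / lam]mulrC mulKf ?gt_eqF ?(lt_trans ltr01 lam1) // lnl.
    have [_ h2] := Hy _ ly.
    have : n (lam * y) * (C *+ 2)^-1 <= C * w (lam * y) * (C *+ 2)^-1.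
      by rewrite ler_wpM2r // invr_ge0 mulrn_wge0 // ltW.
    have -> : C * w (lam * y) * (C *+ 2)^-1 = w (lam * y) / 2.
      by rewrite -mulr_natr; field; rewrite gt_eqF // ?mulr_gt0.
    lra.
  exists (ln 2 / ln lam), 2; split => // L L1.
  exists x0 => x x0x l /andP[l1 _].
  apply: (grow_up lam1 (ler1n _ 2) (lt_trans x0p x0x)) => //.
  + by move=> s t xs st; apply: wm st; apply: le_trans xs; apply: ltW.
  + by move=> y xy; apply: wp; apply: le_trans xy; apply: ltW.
  + by move=> y xy; apply: key; apply: le_trans xy; apply: ltW.
- set Q := 1 + c * ln 2.
  have Q1 : 1 < Q by rewrite /Q ltrDl mulr_gt0 // ln2_gt0.
  have key : forall y, x0 <= y -> Q * w y <= w (2 * y).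
    move=> y y0.
    have y0' : 0 < y by apply: lt_le_trans y0.
    have := wH2 W y0' (ler1n _ 2).
    have [h1 _] := Hy _ y0.
    have : c * w y * ln 2 <= n y * ln 2 by rewrite ler_wpM2r // ltW // ln2_gt0.
    rewrite /Q; lra.
  exists (ln Q / ln 2); split.
    by apply: divr_gt0; [rewrite ln_gt0 | exact: ln2_gt0].
  exists Q^-1; split; first by rewrite invr_gt0 (lt_trans ltr01).
  move=> L L1; exists x0 => x x0x l /andP[l1 _].
  apply: (grow_down (ltr1n _ 2) (ltW Q1) (lt_trans x0p x0x)) => //.
  + by move=> s t xs st; apply: wm st; apply: le_trans xs; apply: ltW.
  + by move=> y xy; apply: wp; apply: le_trans xy; apply: ltW.
  + by move=> y xy; apply: key; apply: le_trans xy; apply: ltW.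
Qed.

Lemma choose_lam (R : realType) (D b : R) : 0 < D -> 0 < b ->
  exists lam, 1 < lam /\ 2 <= D * lam `^ b.
Proof.
move=> D0 b0; set lam := maxr 2 ((2 / D) `^ b^-1).
exists lam; split; first by rewrite /lam lt_max ltr1n.
rewrite -ler_pdivrMl // mulrC.
have -> : 2 / D = ((2 / D) `^ b^-1) `^ b.
  by rewrite -powRrM mulVf ?gt_eqF // powRr1 // divr_ge0 // ltW.
apply: ge0_ler_powR; first exact: ltW.
- by rewrite nnegrE powR_ge0.
- by rewrite nnegrE /lam le_max ler0n.
- by rewrite /lam le_max lexx orbT.
Qed.

Lemma iii_equiv (R : realType) (w n : R -> R) a b : WN w n ->
  Aprop w a -> Bprop w b -> 0 < b -> evequiv n w.
Proof.
move=> W [Ca [Ca0 HA]] [D [D0 HB]] b0.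
have [lam [lam1 Dl]] := choose_lam D0 b0.
have lam0 : 0 < lam by apply: lt_trans lam1.
have lnl : 0 < ln lam by rewrite ln_gt0.
have [x0 H0] := HA 2 (ltr1n _ 2).
have [x1 H1] := HB lam lam1.
exists (ln lam *+ 2)^-1, (Ca * 2 `^ a / ln 2); split; first by rewrite invr_gt0 mulrn_wgt0.
split; first by apply: divr_gt0; [apply: mulr_gt0 => //; exact: powR_gt0 | exact: ln2_gt0].
exists (maxr (maxr x0 (x1 * lam)) 0) => t; rewrite !gt_max => /andP[/andP[tx0 tx1] t0].
split.
- have tl0 : 0 < t / lam by rewrite divr_gt0.
  have tl1 : x1 < t / lam by rewrite ltr_pdivlMr.
  have h1 : D * lam `^ b * w (t / lam) <= w t.
    have := H1 (t / lam) tl1 lam; rewrite [lam * _]mulrC divfK ?gt_eqF //.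
    by apply; rewrite lexx andbT ltW.
  have h3 := wH3 W t0 (ltW lam1).
  have wl0 := w_ge0 W tl0.
  have h2 : 2 * w (t / lam) <= D * lam `^ b * w (t / lam) by rewrite ler_wpM2r.
  rewrite mulrC ler_pdivrMr ?mulrn_wgt0 // -mulr_natr mulrA.
  lra.
- have h0 : w (2 * t) <= Ca * 2 `^ a * w t.
    by apply: H0 => //; rewrite ler1n lexx.
  have h2 := wH2 W t0 (ler1n _ 2).
  have wt0 := w_ge0 W t0.
  rewrite mulrAC ler_pdivlMr ?ln2_gt0 //.
  lra.
Qed.

Lemma ii_equiv (R : realType) (w n : R -> R) a b : WN w n ->
  Aprop n a -> Bprop n b -> 0 < b -> evequiv n w.
Proof.
move=> W [Ca [Ca0 HA]] [D [D0 HB]] b0.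
have [lam [lam1 Dl]] := choose_lam D0 b0.
have lam0 : 0 < lam by apply: lt_trans lam1.
have lnl : 0 < ln lam by rewrite ln_gt0.
have [x0 H0] := HA 2 (ltr1n _ 2).
have [x1 H1] := HB lam lam1.
have [x2 H2] := wevp W.
set y1 := maxr (maxr x1 x2) 0 + 1.
have y10 : 0 < y1 by rewrite /y1 ltr_pwDr // le_max lexx orbT.
have y1x1 : x1 < y1 by rewrite /y1 ltr_pwDr // !le_max lexx.
have y1x2 : x2 < y1 by rewrite /y1 ltr_pwDr // !le_max lexx orbT.
set A := w (lam * y1).
set B := ln lam *+ 2.
have A0 : 0 <= A by apply: (w_ge0 W); rewrite mulr_gt0.
have B0 : 0 < B by rewrite mulrn_wgt0.
have dbl : forall t, y1 < t / lam -> 2 * n (t / lam) <= n t.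
  move=> t yt.
  have tl1 : x1 < t / lam by apply: lt_trans yt.
  have h1 : D * lam `^ b * n (t / lam) <= n t.
    have := H1 (t / lam) tl1 lam; rewrite [lam * _]mulrC divfK ?gt_eqF //.
    by apply; rewrite lexx andbT ltW.
  have : 2 * n (t / lam) <= D * lam `^ b * n (t / lam) by rewrite ler_wpM2r ?(n_ge0 W).
  lra.
have lin : forall t, y1 <= t -> w t <= A + B * n t.
  move=> t yt.
  have [k tk] := pow_unbounded (t / y1) lam1.
  rewrite ler_pdivrMr // mulrC in tk.
  elim: k t yt tk => [|k IH] t yt tk.
    rewrite expr0 mulr1 in tk.
    have -> : t = y1 by apply: le_anti; rewrite tk yt.
    have : w y1 <= A by apply: (WN_mono W) => //; rewrite ler_peMl // ltW.
    have : 0 <= B * n y1 by rewrite mulr_ge0 ?(n_ge0 W) // ltW.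
    lra.
  have t0 : 0 < t by apply: lt_le_trans yt.
  have [tl|tl] := leP t (lam * y1).
    have : w t <= A by apply: (WN_mono W).
    have : 0 <= B * n t by rewrite mulr_ge0 ?(n_ge0 W) // ltW.
    lra.
  have yt' : y1 < t / lam by rewrite ltr_pdivlMr // mulrC.
  have tk' : t / lam <= y1 * lam ^+ k.
    by rewrite ler_pdivrMr // -mulrA -exprSr.
  have ih := IH _ (ltW yt') tk'.
  have h3 := wH3 W t0 (ltW lam1).
  have h2 := dbl t yt'.
  have : ln lam * (2 * n (t / lam)) <= ln lam * n t by rewrite ler_wpM2l // ltW.
  have eB : B = ln lam * 2 by rewrite mulr_natr.
  rewrite eB in ih *.
  lra.
have AB0 : 0 < A + B by lra.
exists (A + B)^-1, (Ca * 2 `^ a / ln 2); split; first by rewrite invr_gt0.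
split; first by apply: divr_gt0; [apply: mulr_gt0 => //; exact: powR_gt0 | exact: ln2_gt0].
exists (maxr (x0 * 2) y1) => t; rewrite !gt_max => /andP[tx0 ty1].
have t0 : 0 < t by apply: lt_trans ty1.
split.
- have [_ n1] := H2 t (lt_trans y1x2 ty1).
  have := lin t (ltW ty1).
  rewrite [(A + B)^-1 * _]mulrC ler_pdivrMr //.
  have : A * 1 <= A * n t by rewrite ler_wpM2l.
  lra.
- have t20 : 0 < t / 2 by rewrite divr_gt0.
  have h0 : n (2 * (t / 2)) <= Ca * 2 `^ a * n (t / 2).
    by apply: H0; [rewrite ltr_pdivlMr | rewrite ler1n lexx].
  have h2 := wH2 W t20 (ler1n _ 2).
  have e2 : 2 * (t / 2) = t by rewrite mulrC divfK // pnatr_eq0.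
  rewrite e2 in h0 h2.
  have wt0 := w_ge0 W t20.
  have p0 : 0 < Ca * 2 `^ a by apply: mulr_gt0 => //; exact: powR_gt0.
  have : Ca * 2 `^ a * (n (t / 2) * ln 2) <= Ca * 2 `^ a * w t.
    by apply: ler_wpM2l; [exact: ltW | lra].
  have : n t * ln 2 <= Ca * 2 `^ a * n (t / 2) * ln 2 by apply: ler_wpM2r => //; exact: ltW (ln2_gt0 R).
  rewrite [_ / ln 2 * w t]mulrAC ler_pdivlMr ?ln2_gt0 //.
  lra.
Qed.


Lemma i_equiv (R : realType) (w n : R -> R) : WN w n ->
  (0 < liminf_pinfty (fun t => (n t / w t)%:E))%E ->
  (limsup_pinfty (fun t => (n t / w t)%:E) < +oo)%E -> evequiv n w.
Proof.
move=> W hinf hsup.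
have [c [c0 hc]] : exists c : R, 0 < c /\ (c%:E < liminf_pinfty (fun t => (n t / w t)%:E))%E.
  move: hinf; case: (liminf_pinfty _) => [r| |] //.
  - rewrite lte_fin => r0; exists (r / 2); split; first by rewrite divr_gt0.
    by rewrite lte_fin ltr_pdivrMr // ltr_pMr // ltr1n.
  - by move=> _; exists 1; split => //; exact: ltry.
have [C hC] : exists C : R, (limsup_pinfty (fun t => (n t / w t)%:E) < C%:E)%E.
  move: hsup; case: (limsup_pinfty _) => [r| |] //.
  - by move=> _; exists (r + 1); rewrite lte_fin ltrDl.
  - by move=> _; exists 0; exact: ltNyr.
have e1 := liminf_gt hc.
have e2 := limsup_lt hC.
exists c, (maxr C 1); split => //; split; first by rewrite lt_max ltr01 orbT.
apply: evb_mono (evb_and (evb_and e1 e2) (wevp W)) => t [[h1 h2] [wt _]].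
rewrite lte_fin ltr_pdivlMr // in h1.
rewrite lte_fin ltr_pdivrMr // in h2.
split; first exact: ltW.
apply: (le_trans (ltW h2)); apply: ler_wpM2r; first exact: ltW.
by rewrite le_max lexx.
Qed.

Lemma equiv_i (R : realType) (w n : R -> R) : WN w n -> evequiv n w ->
  (0 < liminf_pinfty (fun t => (n t / w t)%:E))%E /\
  (limsup_pinfty (fun t => (n t / w t)%:E) < +oo)%E.
Proof.
move=> W [c [C [c0 [C0 H]]]].
have e := evb_and H (wevp W).
split.
- apply: (@lt_le_trans _ _ c%:E); first by rewrite lte_fin.
  apply: liminf_ge; apply: evb_mono e => t [[h1 _] [wt _]].
  by rewrite lee_fin ler_pdivlMr.
- apply: (@le_lt_trans _ _ C%:E); last exact: ltry.
  apply: limsup_le; apply: evb_mono e => t [[_ h2] [wt _]].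
  by rewrite lee_fin ler_pdivrMr.
Qed.


Local Notation ws := weight_sequence.

Lemma quot_gt0 (R : realType) (M : nat -> R) : ws M -> forall p, 0 < quot M p.
Proof. by case=> _ Mp _ _ p; rewrite /quot divr_gt0. Qed.

Lemma quot_le (R : realType) (M : nat -> R) : ws M -> forall i j, (i <= j)%N -> quot M i <= quot M j.
Proof.
move=> W; apply/nondecreasing_seqP => p.
case: W => _ Mp lc _.
have h := lc p.+1 isT; rewrite /= in h.
rewrite /quot ler_pdivrMr // mulrAC ler_pdivlMr //.
by rewrite -expr2 mulrC.
Qed.

Lemma M_succ (R : realType) (M : nat -> R) : ws M -> forall p, M p.+1 = quot M p * M p.
Proof. by case=> _ Mp _ _ p; rewrite /quot divfK // gt_eqF. Qed.

Lemma quot_unbounded (R : realType) (M : nat -> R) : ws M -> forall t, exists j, t < quot M j.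
Proof.
move=> W t; apply/not_existsP => H.
have Ht : forall j, quot M j <= t by move=> j; rewrite leNgt; apply/negP => /(fun h => H j h).
have t0 : 0 < t by apply: lt_le_trans (quot_gt0 W 0) (Ht 0).
have Mle : forall p, M p <= t ^+ p.
  elim=> [|p IH]; first by case: W => -> _ _ _; rewrite expr0.
  rewrite (M_succ W) exprSr mulrC; apply: ler_pM => //.
  - by case: W => _ Mp _ _; exact: ltW.
  - exact: ltW (quot_gt0 W p).
case: (W) => _ Mp _ cv.
have := cvgry_ge cv (t + 1).
case=> N _ HN.
have := HN N.+1 (leqnSn N); rewrite /=.
have : M N.+1 `^ (N.+1%:R^-1) <= t.
  apply: (@le_trans _ _ ((t ^+ N.+1) `^ (N.+1%:R^-1))).
    apply: ge0_ler_powR; first by rewrite invr_ge0.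
    - by rewrite nnegrE ltW.
    - by rewrite nnegrE exprn_ge0 // ltW.
    - exact: Mle.
  rewrite -powR_mulrn; last exact: ltW.
  rewrite -powRrM mulfV ?pnatr_eq0 // powRr1 //; exact: ltW.
lra.
Qed.

Definition Nt (R : realType) (M : nat -> R) (W : ws M) (t : R) : nat :=
  ex_minn (quot_unbounded W t).

Lemma Nt_spec (R : realType) (M : nat -> R) (W : ws M) (t : R) :
  t < quot M (Nt W t) /\ forall j, t < quot M j -> (Nt W t <= j)%N.
Proof. by rewrite /Nt; case: ex_minnP. Qed.

Lemma Nt_lt (R : realType) (M : nat -> R) (W : ws M) (t : R) j :
  (j < Nt W t)%N -> quot M j <= t.
Proof.
move=> jN; rewrite leNgt; apply/negP => /(Nt_spec W t).2.
by rewrite leqNgt jN.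
Qed.

Lemma Nt_ge (R : realType) (M : nat -> R) (W : ws M) (t : R) j :
  (Nt W t <= j)%N -> t < quot M j.
Proof.
move=> Nj; apply: lt_le_trans (Nt_spec W t).1 _; exact: quot_le.
Qed.

Lemma nu_Nt (R : realType) (M : nat -> R) (W : ws M) (t : R) :
  nu (quot M) t = (Nt W t)%:R.
Proof.
rewrite /nu.
have -> : [set j | quot M j <= t] = `I_(Nt W t).
  apply/seteqP; split => j /=.
  - by move=> h; rewrite ltnNge; apply/negP => /Nt_ge; rewrite ltNge h.
  - exact: Nt_lt.
by rewrite (card_fset_set (card_eqxx _)).
Qed.

Definition gg (R : realType) (M : nat -> R) (t : R) (p : nat) := t ^+ p / M p.

Lemma gg_succ (R : realType) (M : nat -> R) (W : ws M) t p :
  gg M t p.+1 = gg M t p * (t / quot M p).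
Proof.
rewrite /gg (M_succ W) exprSr.
have Mp : M p != 0 by case: W => _ Mp _ _; rewrite gt_eqF.
have qp : quot M p != 0 by rewrite gt_eqF // quot_gt0.
by field; rewrite Mp qp.
Qed.

Lemma gg_gt0 (R : realType) (M : nat -> R) (W : ws M) t p : 0 < t -> 0 < gg M t p.
Proof. by move=> t0; case: W => _ Mp _ _; rewrite /gg divr_gt0 // exprn_gt0. Qed.

Lemma gg_max (R : realType) (M : nat -> R) (W : ws M) t : 0 < t ->
  forall p, gg M t p <= gg M t (Nt W t).
Proof.
move=> t0 p.
have up : forall d q, (q + d <= Nt W t)%N -> gg M t q <= gg M t (q + d).
  elim=> [|d IH] q h; first by rewrite addn0.
  apply: (le_trans (IH q _)); first by apply: leq_trans h; rewrite leq_add2l.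
  rewrite addnS gg_succ // ler_peMr ?(ltW (gg_gt0 W _ t0)) //.
  rewrite ler_pdivlMr ?quot_gt0 // mul1r; apply: Nt_lt.
  by rewrite -addnS.
have down : forall d, gg M t (Nt W t + d) <= gg M t (Nt W t).
  elim=> [|d IH]; first by rewrite addn0.
  apply: le_trans IH; rewrite addnS gg_succ //.
  rewrite ler_piMr ?(ltW (gg_gt0 W _ t0)) //.
  rewrite ler_pdivrMr ?quot_gt0 // mul1r; apply: ltW; apply: Nt_ge.
  exact: leq_addr.
have [pN|Np] := leqP p (Nt W t).
  by have := up (Nt W t - p)%N p; rewrite subnKC //; apply.
by have := down (p - Nt W t)%N; rewrite subnKC // ltnW.
Qed.

Lemma omega_eq (R : realType) (M : nat -> R) (W : ws M) t : 0 < t ->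
  omegaM M t = ln (gg M t (Nt W t)).
Proof.
move=> t0; rewrite /omegaM t0.
have ub : ubound [set ln (t ^+ p / M p) | p in [set: nat]] (ln (gg M t (Nt W t))).
  move=> _ [p _ <-]; rewrite -/(gg M t p) ler_ln ?posrE ?gg_gt0 //; exact: gg_max.
apply: le_anti; apply/andP; split.
- apply: ge_sup => //; by exists (ln (gg M t 0)), 0%N.
- apply: ub_le_sup; first by exists (ln (gg M t (Nt W t))).
  by exists (Nt W t).
Qed.

Lemma omega_ge (R : realType) (M : nat -> R) (W : ws M) t : 0 < t ->
  forall p, ln (gg M t p) <= omegaM M t.
Proof.
move=> t0 p; rewrite (omega_eq W t0) ler_ln ?posrE ?gg_gt0 //; exact: gg_max.
Qed.

Lemma ws_WN (R : realType) (M : nat -> R) : ws M -> WN (omegaM M) (nu (quot M)).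
Proof.
move=> W.
have M0 : M 0%N = 1 by case: W.
have gg0 : forall t, gg M t 0 = 1 by move=> t; rewrite /gg M0 expr0 divr1.
split.
- move=> t t0; rewrite -ln1 -(gg0 t); exact: omega_ge.
- by move=> t; rewrite (nu_Nt W).
- move=> s t s0 st; rewrite !(nu_Nt W) ler_nat.
  apply: (Nt_spec W s).2; apply: le_lt_trans st _; exact: (Nt_spec W t).1.
- move=> t l t0 l1.
  have l0 : 0 < l by apply: lt_le_trans l1.
  rewrite (nu_Nt W) (omega_eq W t0).
  have := omega_ge W (mulr_gt0 l0 t0) (Nt W t).
  have -> : gg M (l * t) (Nt W t) = l ^+ Nt W t * gg M t (Nt W t).
    by rewrite /gg exprMn mulrA.
  rewrite lnM ?posrE ?exprn_gt0 ?gg_gt0 // lnXn // mulr_natl.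
  lra.
- move=> t l t0 l1.
  have l0 : 0 < l by apply: lt_le_trans l1.
  rewrite (nu_Nt W) (omega_eq W t0).
  have := omega_ge W (divr_gt0 t0 l0) (Nt W t).
  have -> : gg M (t / l) (Nt W t) = gg M t (Nt W t) / l ^+ Nt W t.
    by rewrite /gg expr_div_n mulrAC.
  rewrite ln_div ?posrE ?exprn_gt0 ?gg_gt0 // lnXn // mulr_natl.
  lra.
- exists (quot M 0) => t t0.
  have tp : 0 < t by apply: lt_trans t0; exact: quot_gt0.
  have N1 : (1 <= Nt W t)%N.
    rewrite lt0n; apply/negP => /eqP h.
    by have := (Nt_spec W t).1; rewrite h ltNge (ltW t0).
  split; last by rewrite (nu_Nt W) ler1n.
  apply: lt_le_trans (omega_ge W tp 1%N).
  have q0 : quot M 0 = M 1%N by rewrite /quot M0 divr1.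
  by rewrite ln_gt0 // /gg expr1 -q0 ltr_pdivlMr ?quot_gt0 // mul1r.
Qed.


End Helpers.
Import Helpers.
Unset Implicit Arguments. Set Strict Implicit.

Theorem corollary4p5 (R : realType) (M : nat -> R) :
  weight_sequence M ->
  let ratio := fun t : R => ((nu (quot M) t / omegaM M t)%R)%:E in
  let cond_i := (0 < liminf_pinfty ratio)%E /\
                (liminf_pinfty ratio <= limsup_pinfty ratio)%E /\
                (limsup_pinfty ratio < +oo)%E in
  let cond_ii := (0 < beta_idx (nu (quot M)))%E /\
                 (alpha_idx (nu (quot M)) < +oo)%E in
  let cond_iii := (0 < beta_idx (omegaM M))%E /\
                  (alpha_idx (omegaM M) < +oo)%E in
  [/\ (cond_i <-> cond_ii), (cond_ii <-> cond_iii) &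
      (cond_i -> beta_idx (omegaM M) = beta_idx (nu (quot M)) /\
                 alpha_idx (omegaM M) = alpha_idx (nu (quot M)))].
Proof.
move=> W ratio cond_i cond_ii cond_iii.
have WW := ws_WN W.
have wpos : evb (fun x => 0 < omegaM M x) by apply: evb_mono (wevp WW) => x [].
have npos : evb (fun x => 0 < nu (quot M) x).
  by apply: evb_mono (wevp WW) => x [_ h]; apply: lt_le_trans h.
have Ei : cond_i <-> evequiv (nu (quot M)) (omegaM M).
  split.
  - by case=> [h1 [_ h3]]; exact: i_equiv WW h1 h3.
  - move=> E; have [h1 h3] := equiv_i WW E.
    by split => //; split => //; exact: liminf_le_limsup.
have Eii : cond_ii <-> evequiv (nu (quot M)) (omegaM M).
  rewrite /cond_ii (beta_pos npos) (alpha_fin npos); split.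
  - by case=> [[b [b0 Bb]] [a Aa]]; exact: ii_equiv WW Aa Bb b0.
  - move=> E; have [[a Aa] [b [b0 Bb]]] := equiv_iii WW E.
    split; first by exists b; split => //; exact: Bprop_transfer E Bb.
    by exists a; exact: Aprop_transfer E Aa.
have Eiii : cond_iii <-> evequiv (nu (quot M)) (omegaM M).
  rewrite /cond_iii (beta_pos wpos) (alpha_fin wpos); split.
  - by case=> [[b [b0 Bb]] [a Aa]]; exact: iii_equiv WW Aa Bb b0.
  - move=> E; have [[a Aa] [b [b0 Bb]]] := equiv_iii WW E.
    by split; [exists b | exists a].
split.
- by rewrite Ei Eii.
- by rewrite Eii Eiii.
- move=> /Ei E; have E' := evequiv_sym E.
  rewrite (betaE wpos) (betaE npos) (alphaE wpos) (alphaE npos); split.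
  + congr (ereal_sup (image _ _)); apply/seteqP; split => b /= Bb.
    * exact: Bprop_transfer E Bb.
    * exact: Bprop_transfer E' Bb.
  + congr (ereal_inf (image _ _)); apply/seteqP; split => a /= Aa.
    * exact: Aprop_transfer E Aa.
    * exact: Aprop_transfer E' Aa.
Qed.
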